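(* Let $f_1,f_2,m$ be integers such that $f(x)=f_1x+f_2x^2 \bmod N$ is a permutation of $\mathbb{Z}_N$. Let $\alpha=\mathrm{lcm}(\lambda,\rho)$ and $f'(x)=(f_1+2m\alpha f_2)x+f_2x^2 \bmod N$. Then $f'$ is a permutation of $\mathbb{Z}_N$, and the graphs $G_f$ and $G_{f'}$ are isomorphic.
   Context: Fix positive integers $\lambda,\rho$ and a positive integer $N$ divisible by both $\lambda$ and $\rho$. Put $n=N/\lambda$ and $r=N/\rho$, and identify $\mathbb{Z}_N$ with $\{0,1,\dots,N-1\}$. For a permutation $f$ of $\mathbb{Z}_N$, define the bipartite multigraph $G_f$ as follows: - it has variable nodes $v_0,\dots,v_{n-1}$ and check nodes $c_0,\dots,c_{r-1}$; - it has $N$ edges $e_0,\dots,e_{N-1}$, where edge $e_i$ (left-label $i$, right-label $f(i)$) joins $v_{\lfloor i/\lambda\rfloor}$ and $c_{\lfloor f(i)/\rho\rfloor}$. An isomorphism of such graphs is a bijection that maps variable nodes to variable nodes and check nodes to check nodes and preserves the number of edges between every pair of nodes. *)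

(* Defs.v *)
From mathcomp Require Import all_boot all_order all_algebra all_fingroup.
Set Implicit Arguments. Unset Strict Implicit. Unset Printing Implicit Defensive.
Import GRing.Theory Num.Theory.

Definition qpp (N : nat) (c1 c2 : int) (x : nat) : nat :=
  `|((c1 * x%:Z + c2 * (x%:Z ^+ 2)) %% N%:Z)%Z|%N.

Definition is_perm_ZN (N : nat) (g : nat -> nat) : Prop :=
  exists p : {perm 'I_N}, forall i : 'I_N, val (p i) = g (val i).

(* Number of edges of G_g between variable node v_a and check node c_b:
   edges e_i (i < N) with floor(i/lam) = a and floor(g(i)/rho) = b. *)
Definition edge_mult (N lam rho : nat) (g : nat -> nat) (a b : nat) : nat :=
  #|[set i : 'I_N | (val i %/ lam == a) && (g (val i) %/ rho == b)]|.

Definition graph_iso (N lam rho : nat) (g h : nat -> nat) : Prop :=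
  exists (s : {perm 'I_(N %/ lam)}) (t : {perm 'I_(N %/ rho)}),
    forall (a : 'I_(N %/ lam)) (b : 'I_(N %/ rho)),
      edge_mult N lam rho g (val a) (val b)
      = edge_mult N lam rho h (val (s a)) (val (t b)).

(* Main.v *)
Require Import Defs.
From mathcomp Require Import all_boot all_order all_algebra all_fingroup.
From mathcomp Require Import zify ring.
Import GRing.Theory Num.Theory.
Set Implicit Arguments. Unset Strict Implicit.
Local Open Scope ring_scope.

Lemma Qcong (N : int) (c1 c2 x y : int) : (N %| x - y)%Z ->
  ((c1 * x + c2 * x ^+ 2) %% N = (c1 * y + c2 * y ^+ 2) %% N)%Z.
Proof.
move=> h; apply/eqP; rewrite eqz_mod_dvd.
have ->: (c1 * x + c2 * x ^+ 2) - (c1 * y + c2 * y ^+ 2) = (x - y) * (c1 + c2 * (x + y)) by ring.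
exact: dvdz_mulr.
Qed.

Lemma dvdz_modsub (N x : int) : (N %| ((x %% N)%Z - x)%R)%Z.
Proof. by rewrite -eqz_mod_dvd modz_mod. Qed.

Lemma dvd_absmod (a N : nat) (x : int) : (0 < N)%N -> (a %| N)%N -> (a%:Z %| x)%Z ->
  (a %| `|(x %% N%:Z)%Z|)%N.
Proof.
move=> N0 aN ax.
have ->: (x %% N%:Z)%Z = x - (x %/ N%:Z)%Z * N%:Z by rewrite {2}(divz_eq x N%:Z); ring.
rewrite -(dvdzE a%:Z). apply: rpredB => //. apply: dvdz_mull. by rewrite dvdzE.
Qed.

Lemma absmodE (N : nat) (x : int) : (0 < N)%N -> (Posz `|(x %% N%:Z)%Z|%N) = (x %% N%:Z)%Z.
Proof. by move=> N0; rewrite abszE ger0_norm // modz_ge0 // eqz_nat -lt0n. Qed.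

Lemma absmod_lt (N : nat) (x : int) : (0 < N)%N -> (`|(x %% N%:Z)%Z| < N)%N.
Proof.
move=> N0.
have h : ((`|(x %% N%:Z)%Z|%N)%:Z < N%:Z)%R by rewrite absmodE // ltz_pmod // ltz_nat.
by rewrite ltz_nat in h.
Qed.

Close Scope ring_scope.
Lemma modmuldiv l n k r : (0 < l)%N -> (r < l)%N -> (0 < n)%N ->
  ((l * k + r) %% (l * n)) %/ l = k %% n.
Proof.
move=> l0 rl n0.
have e : l * k + r = (k %/ n) * (l * n) + (l * (k %% n) + r).
  by rewrite {1}(divn_eq k n) mulnDr addnA; congr (_ + _); rewrite mulnCA mulnC.
rewrite e modnMDl modn_small; last first.
  have : k %% n < n by rewrite ltn_pmod.
  nia.
by rewrite mulnC divnMDl // divn_small // addn0.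
Qed.

Lemma shiftdiv l N d x : (0 < l)%N -> (l %| N)%N -> (l %| d)%N -> (0 < N)%N ->
  ((x + d) %% N) %/ l = (x %/ l + d %/ l) %% (N %/ l).
Proof.
move=> l0 lN ld N0.
have n0 : (0 < N %/ l)%N by rewrite divn_gt0 // dvdn_leq.
rewrite -{1}(divnK lN) -{1}(divnK ld) {1}(divn_eq x l).
rewrite -(@modmuldiv l (N %/ l) (x %/ l + d %/ l) (x %% l) l0 (ltn_pmod x l0) n0).
congr (_ %% _ %/ _); last by rewrite mulnC.
rewrite mulnDr; ring.
Qed.

Lemma ord_gt0 n (x : 'I_n) : (0 < n)%N.
Proof. by case: n x => [[]|]. Qed.

Definition shf_fun n k (x : 'I_n) : 'I_n := Ordinal (ltn_pmod (x + k) (ord_gt0 x)).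

Lemma shf_inj n k : injective (@shf_fun n k).
Proof.
move=> x y /(congr1 val) /= /eqP; rewrite eqn_modDr !modn_small // => /eqP h.
exact: val_inj.
Qed.

Definition shf n k : {perm 'I_n} := perm (@shf_inj n k).

Lemma shfE n k x : val (shf n k x) = ((x + k) %% n)%N.
Proof. by rewrite permE. Qed.

Lemma shf_inv n k (a : 'I_n) u : (u < n)%N ->
  (u == val (((shf n k)^-1)%g a)) = ((u + k) %% n == val a)%N.
Proof.
move=> un; apply/eqP/eqP => [->|h].
  by rewrite -shfE permKV.
have e : shf n k (Ordinal un) = a by apply: val_inj; rewrite shfE.
by rewrite -e permK.
Qed.

Local Open Scope ring_scope.

Theorem proposition3 (lam rho N : nat) (f1 f2 m : int) :
  (0 < lam)%N -> (0 < rho)%N -> (0 < N)%N ->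
  (lam %| N)%N -> (rho %| N)%N ->
  is_perm_ZN N (qpp N f1 f2) ->
  let alpha : int := Posz (lcmn lam rho) in
  let f1' : int := (f1 + 2 * m * alpha * f2)%R in
  is_perm_ZN N (qpp N f1' f2) /\
  graph_iso N lam rho (qpp N f1 f2) (qpp N f1' f2).
Proof.
move=> l0 r0 N0 lN rN [p hp] alpha f1'.
pose D : int := m * alpha.
pose dN : nat := `|(D %% N%:Z)%Z|%N.
pose cN : nat := qpp N f1 f2 dN.
have dNE : Posz dN = (D %% N%:Z)%Z by rewrite absmodE.
have key : forall i : nat, qpp N f1 f2 ((i + dN) %% N)%N = ((qpp N f1' f2 i + cN) %% N)%N.
  move=> i; apply/eqP; rewrite -eqz_nat; apply/eqP.
  rewrite /cN /qpp -!modz_nat !PoszD !absmodE //.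
  rewrite (@Qcong _ _ _ _ (i%:Z + D)); last first.
    have -> : ((i%:Z + (D %% N%:Z)%Z) %% N%:Z)%Z - (i%:Z + D)
      = (((i%:Z + (D %% N%:Z)%Z) %% N%:Z)%Z - (i%:Z + (D %% N%:Z)%Z)) + ((D %% N%:Z)%Z - D) by ring.
    by apply: rpredD; apply: dvdz_modsub.
  rewrite modzDml.
  have -> : ((f1 * (D %% N%:Z)%Z + f2 * (D %% N%:Z)%Z ^+ 2) %% N%:Z)%Z
     = ((f1 * D + f2 * D ^+ 2) %% N%:Z)%Z by apply: Qcong; apply: dvdz_modsub.
  rewrite modzDmr; congr (_ %% _)%Z.
  rewrite /f1' /D; ring.
have ldN : (lam %| dN)%N.
  apply: dvd_absmod => //; apply: dvdz_mull; rewrite dvdzE /=; exact: dvdn_lcml.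
have rdN : (rho %| dN)%N.
  apply: dvd_absmod => //; apply: dvdz_mull; rewrite dvdzE /=; exact: dvdn_lcmr.
have rcN : (rho %| cN)%N.
  apply: dvd_absmod => //; have h : (rho%:Z %| dN%:Z)%Z by rewrite dvdzE.
  by apply: rpredD; apply: dvdz_mull => //; rewrite expr2; apply: dvdz_mull.
have qlt : forall c1 c2 x, (qpp N c1 c2 x < N)%N by move=> c1 c2 x; apply: absmod_lt.
pose sg := shf N dN.
pose tau := shf N cN.
split.
  pose g := fun i => (tau^-1)%g (p (sg i)).
  have ginj : injective g.
    by move=> x y /perm_inj /perm_inj /perm_inj.
  exists (perm ginj) => i; rewrite permE /g.
  apply/eqP; rewrite eq_sym shf_inv // hp shfE key //.
exists ((shf (N %/ lam) (dN %/ lam))^-1)%g, ((shf (N %/ rho) (cN %/ rho))^-1)%g => a b.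
rewrite /edge_mult -[LHS](card_preimset _ (@perm_inj _ sg)).
apply: eq_card => i; rewrite !inE shfE key.
rewrite shf_inv; last by rewrite ltn_divLR // (divnK lN) ltn_ord.
rewrite shf_inv; last by rewrite ltn_divLR // (divnK rN) qlt.
by rewrite !shiftdiv.
Qed.
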